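(* For any positive integers $q$ and $\ell$ with $\ell>q$ and $\ell$ a multiple of $q$, there exists an instance of \textsc{Min-Lin-Eq$(q)$} on the complete bipartite graph $K_{\ell,\ell}$ (i.e. integers $c_{uv}\in\{0,\dots,q-1\}$ for each edge $uv$, oriented from one side to the other, with constraint $x_u-x_v\equiv c_{uv}\pmod q$) such that for every vertex labeling $x$ of $K_{\ell,\ell}$ with labels in $\{0,\dots,q-1\}$, the number of satisfied constraints is at least $\ell^2/q-\Theta(\ell^{3/2})$ and at most $\ell^2/q+\Theta(\ell^{3/2})$; that is, it lies within $C\ell^{3/2}$ of $\ell^2/q$ for a constant $C$ depending only on $q$.
   Context: \textsc{Min-Lin-Eq$(q)$} on a graph $H$: each edge $uv$ (with a fixed orientation $(u,v)$) carries an integer $c_{uv}\in\{0,\dots,q-1\}$ and the constraint $x_u-x_v\equiv c_{uv}\pmod q$ on assignments $x:V(H)\to\{0,\dots,q-1\}$. *)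

(* Defs.v *)
From mathcomp Require Import all_boot.
From Stdlib Require Import Reals.

Set Implicit Arguments.
Unset Strict Implicit.
Unset Printing Implicit Defensive.

(* An instance of Min-Lin-Eq(q) on K_{l,l}: left vertices 'I_l, right vertices
   'I_l, every edge (u,v) oriented from the left vertex u to the right vertex v,
   carrying a label c u v in {0,...,q-1}.  A labeling assigns x u to left vertices
   and y v to right vertices, with labels in {0,...,q-1}.  The constraint on edge
   (u,v) is  x_u - x_v = c_uv (mod q), i.e.  x u = y v + c u v (mod q). *)
Definition lin_eq_sat (q l : nat) (c : 'I_l -> 'I_l -> 'I_q)
  (x y : 'I_l -> 'I_q) (u v : 'I_l) : bool :=
  (nat_of_ord (x u) == nat_of_ord (y v) + nat_of_ord (c u v) %[mod q]).

Definition num_sat (q l : nat) (c : 'I_l -> 'I_l -> 'I_q)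
  (x y : 'I_l -> 'I_q) : nat :=
  #|[set e : 'I_l * 'I_l | lin_eq_sat c x y e.1 e.2]|.

(* Main.v *)
Require Import Defs.
From mathcomp Require Import all_boot.
From Stdlib Require Import Reals Lra.
From mathcomp Require all_order all_algebra all_field all_solvable zify ring.

Module Aux.
Import all_order all_algebra all_field all_solvable zify ring.
Import Order.TTheory GRing.Theory Num.Theory.
Set Implicit Arguments. Unset Strict Implicit. Unset Printing Implicit Defensive.

Section FieldPart.
Variables (F : finFieldType) (q : nat) (w : F).
Hypotheses (q_gt0 : 0 < q) (qn : q %| #|F|.-1) (prim : (#|F|.-1).-primitive_root%R w).
Local Notation n := #|F|.-1.

Definition dl (z : F) : nat :=
  if [pick i : 'I_n | (w ^+ i == z)%R] is Some i then val i else 0.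

Lemma n_gt0 : 0 < n. Proof. exact: prim_order_gt0 prim. Qed.

Lemma dl_lt z : dl z < n.
Proof. rewrite /dl; case: pickP => [i _|_]; [exact: ltn_ord | exact: n_gt0]. Qed.

Lemma unit_pow (z : F) : (z != 0)%R -> (z ^+ n = 1)%R.
Proof.
move=> nz; apply: (mulIf nz); rewrite mul1r -exprSr prednK ?expf_card //.
by apply/card_gt0P; exists z.
Qed.

Lemma dlP (z : F) : (z != 0)%R -> (w ^+ dl z = z)%R.
Proof.
move=> nz; rewrite /dl; case: pickP => [i /eqP //|H].
have [i Hi] := prim_rootP prim (unit_pow nz).
by have := H i; rewrite -Hi eqxx.
Qed.

Lemma dlM (a b : F) : (a != 0)%R -> (b != 0)%R -> dl a = dl (a / b)%R + dl b %[mod q].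
Proof.
move=> na nb.
have nab : (a / b != 0)%R by rewrite mulf_neq0 ?invr_eq0.
have : (w ^+ dl a == w ^+ (dl (a / b)%R + dl b))%R.
  by rewrite exprD !dlP // divfK.
rewrite (eq_prim_root_expr prim) => /eqP H.
by rewrite -(modn_dvdm _ qn) H modn_dvdm.
Qed.

Lemma count_bound (a b : F) (y1 y2 : nat) : a != b ->
  #|[set z : F | (y1 + dl (z + a)%R %% q) %% q == (y2 + dl (z + b)%R %% q) %% q]|
    <= (n %/ q).+1 + 2.
Proof.
move=> nab.
Local Open Scope ring_scope.
set Z := [set z : F | _].
pose Z' := [set z in Z | (z + a != 0) && (z + b != 0)].
have h1 : (#|Z| <= 2 + #|Z'|)%nat.
  have sub : Z \subset [set -a; -b] :|: Z'.
    apply/subsetP => z zZ; rewrite !inE.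
    case: (z =P -a) => [//|/eqP ha]; case: (z =P -b) => [//|/eqP hb] /=.
    rewrite inE in zZ; rewrite zZ /=; apply/andP; split.
      by apply: contra ha; rewrite addr_eq0.
    by apply: contra hb; rewrite addr_eq0.
  apply: (leq_trans (subset_leq_card sub)); rewrite cardsU.
  apply: (leq_trans (leq_subr _ _)); apply: leq_add => //.
  by rewrite cards2; case: (_ != _).
pose phi z := (z + a) / (z + b).
have inj : {in Z' &, injective phi}.
  move=> z1 z2; rewrite !inE => /and3P[_ _ nz1] /and3P[_ _ nz2].
  rewrite /phi => /eqP; rewrite eq_sym -subr_eq0 => /eqP E.
  have : (z1 - z2) * (a - b) = 0.
    have -> : (z1 - z2) * (a - b) =
      ((z2 + a) / (z2 + b) - (z1 + a) / (z1 + b)) * ((z1 + b) * (z2 + b)).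
      by field; rewrite nz1 nz2.
    by rewrite E mul0r.
  move/eqP; rewrite mulf_eq0 !subr_eq0 (negbTE nab) orbF.
  by move/eqP.
pose W := [set u : F | (u != 0) && ((y1 + dl u) %% q == y2 %% q)%nat].
have h2 : [set phi z | z in Z'] \subset W.
  apply/subsetP => u /imsetP[z]; rewrite !inE => /and3P[HZ na0 nb0] ->.
  apply/andP; split; first by rewrite mulf_neq0 ?invr_eq0.
  have HM := dlM na0 nb0.
  rewrite -(eqn_modDr (dl (z + b))) -addnA -modnDmr -HM modnDmr.
  by rewrite -modnDmr (eqP HZ) modnDmr.
pose psi (u : F) : 'I_(n %/ q).+1 := inord (dl u %/ q)%nat.
have lt u : (dl u %/ q < (n %/ q).+1)%nat by rewrite ltnS leq_div2r // ltnW // dl_lt.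
have inj2 : {in W &, injective psi}.
  move=> u1 u2; rewrite !inE => /andP[n1 e1] /andP[n2 e2].
  rewrite /psi => /(congr1 (@nat_of_ord _)); rewrite !inordK // => ed.
  have em : (dl u1 %% q = dl u2 %% q)%nat.
    by apply/eqP; rewrite -(eqn_modDl y1) (eqP e1) (eqP e2).
  have : (dl u1 = dl u2)%nat by rewrite (divn_eq (dl u1) q) ed em -divn_eq.
  by move=> E; rewrite -(dlP n1) -(dlP n2) E.
have h3 : (#|W| <= (n %/ q).+1)%nat.
  by rewrite -(card_in_imset inj2); apply: (leq_trans (max_card _)); rewrite card_ord.
rewrite addnC; apply: (leq_trans h1); rewrite leq_add2l.
rewrite -(card_in_imset inj); exact: leq_trans (subset_leq_card h2) h3.
Qed.

End FieldPart.
Local Open Scope ring_scope.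
Lemma cauchy_schwarz (R : realDomainType) (l : nat) (f : 'I_l -> R) :
  (\sum_i f i) ^+ 2 <= l%:R * \sum_i f i ^+ 2.
Proof.
set S := \sum_i f i; set Q := \sum_i f i ^+ 2.
have E1 i : \sum_j (f i - f j) ^+ 2 = l%:R * f i ^+ 2 - 2 * f i * S + Q.
  rewrite (eq_bigr (fun j => f i ^+ 2 - 2 * f i * f j + f j ^+ 2)); last first.
    by move=> j _; ring.
  rewrite big_split sumrB /= sumr_const card_ord -mulr_sumr /S /Q.
  ring.
have E : \sum_i \sum_j (f i - f j) ^+ 2 = 2 * (l%:R * Q - S ^+ 2).
  rewrite (eq_bigr _ (fun i _ => E1 i)) big_split sumrB /= sumr_const card_ord.
  rewrite -mulr_sumr -mulr_suml -mulr_sumr -/S -/Q mulr_natl; ring.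
have H : 0 <= \sum_i \sum_j (f i - f j) ^+ 2.
  by apply: sumr_ge0 => i _; apply: sumr_ge0 => j _; exact: sqr_ge0.
rewrite E in H; rewrite -subr_ge0; move: H; rewrite pmulr_rge0 //.
Qed.
Lemma sum_delta (R : pzRingType) (T : finType) (b : T) (f : T -> R) :
  \sum_a (a == b)%:R * f a = f b.
Proof.
rewrite (bigD1 b) //= eqxx mul1r big1 ?addr0 // => a /negbTE ->.
by rewrite mul0r.
Qed.

Lemma inner_sum (q : nat) (al be : 'I_q) :
  \sum_(a : 'I_q) (((q * (a == al))%:R - 1) * ((q * (a == be))%:R - 1) : int)
   = q%:R * ((q * (al == be))%:R - 1).
Proof.
rewrite (eq_bigr (fun a => q%:R * q%:R * ((a == al)%:R * (a == be)%:R) - q%:R * ((a == al)%:R * 1)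
    - q%:R * ((a == be)%:R * 1) + 1)); last by move=> a _; rewrite !natrM; ring.
rewrite !big_split /= !sumrN -!mulr_sumr !sum_delta sumr_const card_ord.
by rewrite natrM; ring.
Qed.

Lemma main_bound (T : finType) (l q K : nat) (iota : 'I_l -> T)
  (iota_inj : injective iota) (alpha : 'I_l -> T -> 'I_q) (x : 'I_l -> 'I_q)
  (Hoff : forall v v', v != v' ->
     (q * #|[set z | alpha v z == alpha v' z]| <= #|T| + K)%nat) :
  ((q * \sum_(u < l) \sum_(v < l) (x u == alpha v (iota u)))%nat%:R - (l * l)%nat%:R : int) ^+ 2
    <= (l * (q * (l * (q * #|T|) + l * l * K)))%nat%:R.
Proof.
pose G z (a : 'I_q) : int := \sum_v ((q * (a == alpha v z))%:R - 1).
have step1 : ((q * \sum_(u < l) \sum_(v < l) (x u == alpha v (iota u)))%nat%:R - (l * l)%nat%:R : int)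
    = \sum_u G (iota u) (x u).
  rewrite /G. rewrite (eq_bigr (fun u => \sum_v ((q * (x u == alpha v (iota u)))%:R : int) - l%:R)); last by move=> u _; rewrite sumrB sumr_const card_ord.
  rewrite sumrB sumr_const card_ord big_distrr natr_sum /=.
  under [in RHS]eq_bigr => u _ do rewrite -natr_sum -big_distrr /=.
  by rewrite natrM mulr_natr.
rewrite step1.
apply: le_trans (cauchy_schwarz _) _.
pose H z := \sum_a G z a ^+ 2.
have H0 z : 0 <= H z by apply: sumr_ge0 => a _; exact: sqr_ge0.
have step3 : \sum_u G (iota u) (x u) ^+ 2 <= \sum_z H z.
  apply: (@le_trans _ _ (\sum_u H (iota u))).
    apply: ler_sum => u _; rewrite /H (bigD1 (x u)) //= lerDl.
    by apply: sumr_ge0 => a _; exact: sqr_ge0.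
  have E : \sum_u H (iota u) = \sum_(z in iota @: [set: 'I_l]) H z.
    rewrite big_imset /=; last by move=> u1 u2 _ _; exact: iota_inj.
    by apply: eq_bigl => u; rewrite inE.
  rewrite E [X in _ <= X](bigID (fun z => z \in iota @: [set: 'I_l])) /= lerDl.
  by apply: sumr_ge0 => z _.
pose Tv v v' : int := \sum_z ((q * (alpha v z == alpha v' z))%:R - 1).
have step4 : \sum_z H z = \sum_v \sum_v' q%:R * Tv v v'.
  rewrite /H /G.
  under eq_bigr => z _ do under eq_bigr => a _ do rewrite expr2 big_distrlr /=.
  under eq_bigr => z _ do rewrite exchange_big /=.
  under eq_bigr => z _ do under eq_bigr => v _ do rewrite exchange_big /=.
  rewrite exchange_big /=; apply: eq_bigr => v _.
  rewrite exchange_big /=; apply: eq_bigr => v' _.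
  rewrite /Tv mulr_sumr; apply: eq_bigr => z _.
  exact: inner_sum.
have step5 v v' : Tv v v' <= (v == v')%:R * (q * #|T|)%:R + K%:R.
  have -> : Tv v v' = (q * #|[set z | alpha v z == alpha v' z]|)%:R - #|T|%:R.
    rewrite /Tv sumrB sumr_const -natr_sum -big_distrr /= -sum1dep_card [in RHS]big_mkcond /=.
    by [].
  case: (v =P v') => [<-|/eqP ne].
    have -> : [set z | alpha v z == alpha v z] = setT by apply/setP => z; rewrite !inE eqxx.
    rewrite cardsT /= mul1r !natz; lia.
  have := Hoff _ _ ne; rewrite mul0r add0r !natz => h; lia.
apply: le_trans (ler_wpM2l (ler0n _ l) step3) _.
rewrite step4.
have step6 : \sum_v \sum_v' q%:R * Tv v v' <=
    \sum_(v < l) \sum_(v' < l) q%:R * ((v' == v)%:R * (q * #|T|)%:R + K%:R).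
  apply: ler_sum => v _; apply: ler_sum => v' _; apply: ler_wpM2l => //.
  by rewrite eq_sym; exact: step5.
apply: le_trans (ler_wpM2l (ler0n _ l) step6) _.
have -> : \sum_(v < l) \sum_(v' < l) q%:R * ((v' == v)%:R * (q * #|T|)%:R + K%:R)
    = (q * (l * (q * #|T|) + l * l * K))%:R :> int.
  under eq_bigr => v _ do rewrite -mulr_sumr big_split /= sum_delta sumr_const card_ord.
  rewrite -mulr_sumr sumr_const card_ord.
  by rewrite !(natrM, natrD); ring.
by rewrite -natrM.
Qed.

Local Close Scope ring_scope.
Local Open Scope nat_scope.

Lemma nat_main (q : nat) : 0 < q -> exists b : nat, 0 < b /\
  forall l : nat, q < l -> exists c : 'I_l -> 'I_l -> 'I_q,
  forall x y : 'I_l -> 'I_q,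
    (q * num_sat c x y - l * l) * (q * num_sat c x y - l * l) <= (q * (b + 3) * l) * (q * (b + 3) * l) * l /\
    (l * l - q * num_sat c x y) * (l * l - q * num_sat c x y) <= (q * (b + 3) * l) * (q * (b + 3) * l) * l.
Proof.
move=> q_gt0.
have [p qp pp] := prime_above q.
pose e := totient q.
have e_gt0 : 0 < e by rewrite totient_gt0.
pose b := expn p e.
have b_gt1 : 1 < b by rewrite /b -{1}(expn0 p) ltn_exp2l ?prime_gt1.
exists b; split; first exact: ltnW.
move=> l ql.
have l_gt0 : 0 < l by apply: leq_ltn_trans ql.
pose k := (trunc_log b l).+1.
have ek_gt0 : 0 < e * k by rewrite muln_gt0 e_gt0.
have [F _ cardF] := pPrimePowerField pp ek_gt0.
have cardFb : #|F| = expn b k by rewrite cardF /b -expnM.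
have hle : l <= #|F| by rewrite cardFb ltnW // trunc_log_ltn.
have hPb : #|F| <= b * l.
  by rewrite cardFb /k expnS leq_mul2l trunc_logP // orbT.
have qn : q %| #|F|.-1.
  have cop : coprime p q.
    rewrite prime_coprime //; apply/negP => /(dvdn_leq q_gt0).
    by rewrite leqNgt qp.
  have hb : b = 1 %[mod q] by rewrite /b Euler_exp_totient.
  have hbk : expn b k = 1 %[mod q] by rewrite -modnXm hb modnXm exp1n.
  have bk_gt0 : 0 < expn b k by rewrite expn_gt0 (ltnW b_gt1).
  rewrite cardFb -subn1 -eqn_mod_dvd //.
  by apply/eqP.
have n_gt0 : 0 < #|F|.-1.
  have : 1 < #|F| by apply: leq_trans hle; apply: leq_ltn_trans ql.
  by case: #|F| => [|[|m]].
have [w prim] : exists w : F, (#|F|.-1).-primitive_root%R w.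
  have Hall : all (#|F|.-1).-unity_root%R (enum (predC1 (0:F)%R)).
    apply/allP => z; rewrite mem_enum /= => nz.
    by rewrite unity_rootE (unit_pow nz).
  have Hsz : #|F|.-1 <= size (enum (predC1 (0:F)%R)) by rewrite -cardE cardC1.
  have := @has_prim_root F #|F|.-1 (enum (predC1 (0:F)%R)) n_gt0 Hall (enum_uniq _) Hsz.
  by case/hasP => w _ hw; exists w.
pose iota (i : 'I_l) : F := enum_val (widen_ord hle i).
have iota_inj : injective iota.
  move=> i j E; apply/val_inj; exact: (congr1 val (enum_val_inj E)).
pose c u v : 'I_q := Ordinal (ltn_pmod (dl w (iota u + iota v)%R) q_gt0).
exists c; move=> x y.
pose alpha v z : 'I_q := Ordinal (ltn_pmod (y v + dl w (z + iota v)%R %% q) q_gt0).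
have Hoff : forall v v', v != v' ->
    q * #|[set z | alpha v z == alpha v' z]| <= #|F| + 3 * q.
  move=> v v' ne.
  have ne' : iota v != iota v' by apply: contra ne => /eqP /iota_inj ->.
  have h := count_bound qn prim (y v) (y v') ne'.
  have -> : [set z | alpha v z == alpha v' z] =
    [set z | (y v + dl w (z + iota v)%R %% q) %% q == (y v' + dl w (z + iota v')%R %% q) %% q].
    by apply/setP => z; rewrite !inE.
  apply: (leq_trans (n := q * ((#|F|.-1 %/ q).+1 + 2))).
    by rewrite leq_mul2l h orbT.
  have := divnK qn; move: (#|F|.-1 %/ q) => m hm.
  have : #|F|.-1 <= #|F| by apply: leq_pred.
  rewrite -hm; lia.
have MB := main_bound iota_inj x Hoff.
have S_eq : num_sat c x y = \sum_(u < l) \sum_(v < l) (x u == alpha v (iota u)).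
  rewrite /num_sat -sum1dep_card pair_big /= big_mkcond /=.
  apply: eq_bigr => -[u v] _ /=; rewrite /lin_eq_sat (modn_small (ltn_ord (x u))).
  by [].
rewrite -S_eq in MB.
set S := num_sat c x y in MB *.
set M := l * (q * (l * (q * #|F|) + l * l * (3 * q))) in MB.
have HM : M <= q * (b + 3) * l * (q * (b + 3) * l) * l.
  apply: (leq_trans (n := l * (q * (l * (q * (b * l)) + l * l * (3 * q))))).
    by rewrite /M; apply: leq_mul => //; apply: leq_mul => //; apply: leq_add => //; apply: leq_mul => //; apply: leq_mul.
  have E1 : l * (q * (l * (q * (b * l)) + l * l * (3 * q))) = (q * q * l * l * l) * (b + 3).
    by ring.
  have E2 : q * (b + 3) * l * (q * (b + 3) * l) * l = (q * q * l * l * l * (b + 3)) * (b + 3).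
    by ring.
  by rewrite E1 E2 leq_pmulr // addn_gt0 orbT.
have [le|lt] := leqP (l * l) (q * S).
  rewrite -natrB // -natrX ler_nat in MB.
  have -> : l * l - q * S = 0 by apply/eqP; rewrite subn_eq0.
  split => //; rewrite mulnn; apply: leq_trans MB HM.
rewrite -opprB -natrB ?(ltnW lt) // sqrrN -natrX ler_nat in MB.
have -> : q * S - l * l = 0 by apply/eqP; rewrite subn_eq0 ltnW.
split => //; rewrite mulnn; apply: leq_trans MB HM.
Qed.

End Aux.

Lemma real_step (Q L B S0 s : R) : (0 < Q)%R -> (0 <= L)%R -> (0 < B)%R -> (0 <= s)%R ->
  (s * s = L)%R -> (0 <= Q * S0 - L * L)%R ->
  ((Q * S0 - L * L) * (Q * S0 - L * L) <= Q * B * L * (Q * B * L) * L)%R ->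
  (Rabs (S0 - L * L / Q) <= B * (L * s))%R.
Proof.
intros hQ hL hB hs hsL hd H.
set d := (Q * S0 - L * L)%R in hd H |- *.
assert (E : (S0 - L * L / Q = d / Q)%R) by (unfold d; field; lra).
rewrite E.
assert (hX : (0 <= Q * B * L * s)%R).
{ apply Rmult_le_pos; [|lra]. apply Rmult_le_pos; [|lra]. apply Rmult_le_pos; lra. }
assert (Hd : (d <= Q * B * L * s)%R).
{ apply Rsqr_incr_0_var; [|exact hX]. unfold Rsqr.
  replace (Q * B * L * s * (Q * B * L * s))%R with (Q * B * L * (Q * B * L) * (s * s))%R by ring.
  rewrite hsL. exact H. }
rewrite Rabs_right.
- apply (Rmult_le_reg_l Q); [lra|]. unfold Rdiv.
  replace (Q * (d * / Q))%R with d by (field; lra). nra.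
- unfold Rdiv. apply Rle_ge. apply Rmult_le_pos; [lra|]. left; apply Rinv_0_lt_compat; lra.
Qed.

Lemma real_step2 (Q L B S0 s : R) : (0 < Q)%R -> (0 <= L)%R -> (0 < B)%R -> (0 <= s)%R ->
  (s * s = L)%R -> (0 <= L * L - Q * S0)%R ->
  ((L * L - Q * S0) * (L * L - Q * S0) <= Q * B * L * (Q * B * L) * L)%R ->
  (Rabs (S0 - L * L / Q) <= B * (L * s))%R.
Proof.
intros hQ hL hB hs hsL hd H.
set d := (L * L - Q * S0)%R in hd H |- *.
assert (E : (S0 - L * L / Q = - (d / Q))%R) by (unfold d; field; lra).
rewrite E Rabs_Ropp.
assert (hX : (0 <= Q * B * L * s)%R).
{ apply Rmult_le_pos; [|lra]. apply Rmult_le_pos; [|lra]. apply Rmult_le_pos; lra. }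
assert (Hd : (d <= Q * B * L * s)%R).
{ apply Rsqr_incr_0_var; [|exact hX]. unfold Rsqr.
  replace (Q * B * L * s * (Q * B * L * s))%R with (Q * B * L * (Q * B * L) * (s * s))%R by ring.
  rewrite hsL. exact H. }
rewrite Rabs_right.
- apply (Rmult_le_reg_l Q); [lra|]. unfold Rdiv.
  replace (Q * (d * / Q))%R with d by (field; lra). nra.
- unfold Rdiv. apply Rle_ge. apply Rmult_le_pos; [lra|]. left; apply Rinv_0_lt_compat; lra.
Qed.

Theorem lemma7 : forall q : nat, (0 < q)%N ->
  exists C : R, (0 < C)%R /\
  forall l : nat, (q < l)%N -> (q %| l)%N ->
  exists c : 'I_l -> 'I_l -> 'I_q,
  forall x y : 'I_l -> 'I_q,
    (Rabs (INR (num_sat c x y) - INR (l * l) / INR q)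
       <= C * (INR l * sqrt (INR l)))%R.
Proof.
intros q hq.
destruct (Aux.nat_main hq) as [b [hb H]].
exists (INR (b + 3)). split.
{ apply lt_0_INR. apply/ltP. by rewrite addn_gt0 orbT. }
intros l hl _. destruct (H l hl) as [c Hc]. exists c. intros x y.
destruct (Hc x y) as [H1 H2].
set S0 := num_sat c x y in H1 H2 |- *.
move/leP in H1. move/leP in H2.
apply le_INR in H1. apply le_INR in H2.
rewrite !mult_INR in H1, H2.
assert (hQ : (0 < INR q)%R) by (apply lt_0_INR; apply/ltP; exact hq).
assert (hL : (0 <= INR l)%R) by apply pos_INR.
assert (hB : (0 < INR (b + 3))%R) by (apply lt_0_INR; apply/ltP; by rewrite addn_gt0 orbT).
assert (hs := sqrt_pos (INR l)).
assert (hsL : (sqrt (INR l) * sqrt (INR l) = INR l)%R) by (apply sqrt_sqrt; exact hL).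
rewrite mult_INR.
destruct (leqP (l * l) (q * S0)) as [le|lt].
- rewrite minus_INR in H1; [|apply/leP; exact le].
  rewrite !mult_INR in H1.
  apply real_step; try assumption.
  assert (T := le_INR _ _ (elimT leP le)). rewrite !mult_INR in T. lra.
- rewrite minus_INR in H2; [|apply/leP; exact (ltnW lt)].
  rewrite !mult_INR in H2.
  apply real_step2; try assumption.
  assert (T := le_INR _ _ (elimT leP (ltnW lt))). rewrite !mult_INR in T. lra.
Qed.
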